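(* Let $A$ be a finite alphabet. Consider two words $u,u'\in A^*$, both of richness $m$, with rich factorizations $u=u_1a_1\cdots u_ma_mv$ and $u'=u'_1a_1\cdots u'_ma_mv'$ (with the same letters $a_1,\ldots,a_m$). Suppose that $v\sim_n v'$ and that $u_i\sim_{n+1}u'_i$ for all $i=1,\ldots,m$. Then $u\sim_{n+m}u'$.
   Context: A word is rich if every letter of $A$ occurs in it, and poor otherwise. $u$ is $\ell$-rich if $u=w_1\cdots w_\ell w'$ with $w_1,\ldots,w_\ell$ rich; the richness of $u$ is the largest such $\ell$. The rich factorization of $u$ is defined inductively: if $u$ is poor it is $u=v$ with $m=0$; otherwise $u_1a_1$ ($a_1$ a letter) is the shortest rich prefix of $u$, followed by the rich factorization $u_2a_2\cdots u_ma_mv$ of the remaining suffix. Thus $u=u_1a_1\cdots u_ma_mv$ with $m$ the richness of $u$. $u\sim_n v$ iff $u,v$ have the same (scattered) subwords of length at most $n$. *)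

(* Defs.v *)
From mathcomp Require Import all_boot.
Set Implicit Arguments. Unset Strict Implicit. Unset Printing Implicit Defensive.

Definition rich (A : finType) (w : seq A) : bool := [forall a : A, a \in w].

Definition sim (A : finType) (n : nat) (u v : seq A) : Prop :=
  forall w : seq A, size w <= n -> subseq w u = subseq w v.

(* rich_fact u fs v : u = u_1 a_1 ... u_m a_m v is the rich factorization of u,
   where fs = [:: (u_1,a_1); ...; (u_m,a_m)].  At each step u_i a_i is the
   shortest rich prefix of the remaining suffix, i.e. u_i a_i is rich and u_i
   is poor (every shorter prefix is a prefix of u_i, hence poor); the final
   remainder v is poor. *)
Fixpoint rich_fact (A : finType) (u : seq A) (fs : seq (seq A * A)) (v : seq A)
  : Prop :=
  match fs with
  | [::] => u = v /\ ~~ rich v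
  | (ui, ai) :: fs' =>
      exists r, u = ui ++ ai :: r /\ rich (rcons ui ai) /\ ~~ rich ui
                /\ rich_fact r fs' v
  end.

Definition lrich (A : finType) (l : nat) (u : seq A) : Prop :=
  exists (ws : seq (seq A)) (w' : seq A),
    size ws = l /\ all (@rich A) ws /\ u = flatten ws ++ w'.
Definition richness (A : finType) (u : seq A) (m : nat) : Prop :=
  lrich m u /\ forall l, lrich l u -> l <= m.

(* Main.v *)
Require Import Defs.
From mathcomp Require Import all_boot.
From mathcomp Require Import zify.
Set Implicit Arguments. Unset Strict Implicit. Unset Printing Implicit Defensive.

Lemma subseq_catP (T : eqType) (w s t : seq T) : subseq w (s ++ t) ->
  exists w1 w2, w = w1 ++ w2 /\ subseq w1 s /\ subseq w2 t.
Proof.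
elim: s w => [|c s IH] w /=.
  by move=> H; exists [::], w.
case: w => [|d w] /=.
  by move=> _; exists [::], [::]; rewrite !sub0seq.
case: eqP => [->|_] H.
  have [w1 [w2 [-> [H1 H2]]]] := IH _ H.
  by exists (c :: w1), w2; rewrite /= eqxx.
have [w1 [w2 [E [H1 H2]]]] := IH _ H.
exists w1, w2; split=> //; split=> //.
exact: subseq_trans H1 (subseq_cons _ _).
Qed.

Lemma drop_after (T : eqType) (w s t : seq T) i : subseq w (s ++ t) ->
  ~~ subseq (take i.+1 w) s -> subseq (drop i w) t.
Proof.
move=> /subseq_catP [w1 [w2 [-> [H1 H2]]]] Hn.
case: (ltnP i (size w1)) => Hi.
  by rewrite takel_cat // (subseq_trans (take_subseq _ _) H1) in Hn.
rewrite drop_cat ltnNge Hi /=.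
exact: subseq_trans (drop_subseq _ _) H2.
Qed.

Lemma cons_sub (T : eqType) (c : T) s t w : c \in s -> subseq w t ->
  subseq (c :: w) (s ++ t).
Proof.
move=> /splitPr [s1 s2] Hw.
rewrite -catA; apply: subseq_trans (suffix_subseq s1 _).
by rewrite /= eqxx; apply: subseq_trans Hw (suffix_subseq _ _).
Qed.

Lemma rf_rich (A : finType) fs (r v : seq A) : rich_fact r fs v ->
  forall w, size w <= size fs -> subseq w r.
Proof.
elim: fs r => [|[x b] fs IH] r /=.
  by move=> _ w; rewrite leqn0 => /nilP ->; rewrite sub0seq.
move=> [r0 [-> [Hr [_ Hf]]]] [|c w] /=; first by rewrite sub0seq.
move=> Hs.
have Hc : c \in x ++ [:: b] by rewrite cats1; move/forallP: Hr; apply.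
by rewrite -[b :: r0]/([:: b] ++ r0) catA; apply: cons_sub Hc (IH _ Hf _ Hs).
Qed.
Lemma key (A : finType) n j (x x' y y' : seq A) b :
  rich (rcons x b) -> sim n.+1 x x' -> sim (n + j) y y' ->
  (forall w, size w <= j -> subseq w y') ->
  forall w, size w <= (n + j).+1 -> subseq w (x ++ b :: y) ->
  subseq w (x' ++ b :: y').
Proof.
move=> Hr Hx Hy Hy' w Hsw Hw.
pose P := fun i => (i <= size w) && subseq (take i w) x.
have exP : exists i, P i by exists 0; rewrite /P take0 sub0seq.
have ubP : forall i, P i -> i <= size w by move=> i /andP[].
case: (ex_maxnP exP ubP) => i /andP [Hi Hpi] Hmax.
have szt : forall k (s : seq A), size (take k s) = minn k (size s).
  by move=> k s; rewrite size_take; case: ltnP => h; lia.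
case: (leqP n.+1 i) => Hni.
  rewrite -(cat_take_drop n.+1 w) -[b :: y']/([:: b] ++ y') catA.
  apply: cat_subseq.
    apply: subseq_trans (prefix_subseq _ _).
    rewrite -(Hx _); last by rewrite szt; lia.
    apply: subseq_trans Hpi.
    by rewrite -(take_takel w Hni) take_subseq.
  idtac.
  apply: Hy'; rewrite size_drop; lia.
have Hp' : subseq (take i w) x' by rewrite -Hx // szt; lia.
case: (ltnP i (size w)) => Hiw; last first.
  rewrite take_oversize // in Hp'.
  exact: subseq_trans Hp' (prefix_subseq _ _).
have Hnt : ~~ subseq (take i.+1 w) x.
  apply/negP => H; have := Hmax i.+1; rewrite /P Hiw H => /(_ isT); lia.
have Hq := drop_after Hw Hnt.
clear Hmax ubP exP P.
have Hsp : size (take i w) = i.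
  by rewrite szt; apply/minn_idPl.
case E: (drop i w) Hq => [|c q'] Hq.
  by move: (size_drop i w); rewrite E /= => h; move/eqP: h; rewrite eq_sym subn_eq0 leqNgt Hiw.
have Ew : w = take i w ++ c :: q' by rewrite -E cat_take_drop.
have Ht1 : take i.+1 w = take i w ++ [:: c].
  by rewrite {1}Ew take_cat Hsp ltnNge leqnSn /= subSnn /= take0.
rewrite Ht1 in Hnt; rewrite Ew.
have Hsq : size w = i + (size q').+1.
  by rewrite {1}Ew size_cat Hsp.
move: Hq => /=.
case: eqP => [Ecb|Ncb] Hq.
  rewrite Ecb; apply: cat_subseq => //=; rewrite eqxx -Hy //; move: Hsw; rewrite Hsq addnS ltnS; apply: leq_trans; exact: leq_addl.
apply: cat_subseq => //.
apply: subseq_trans (subseq_cons _ b).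
rewrite -Hy //.
case: i Hi Hpi Hni Hp' Hiw Hnt E Hsp Ew Ht1 Hsq => [|i] Hi Hpi Hni Hp' Hiw Hnt E Hsp Ew Ht1 Hsq; last first.
  by move: Hsw; rewrite Hsq addSn ltnS /=; apply: leq_trans; exact: leq_addl.
exfalso; move: Hnt; rewrite take0 /= sub1seq.
have : c \in rcons x b by move/forallP: Hr; apply.
by rewrite mem_rcons in_cons => /orP [/eqP/Ncb|->].
Qed.

Lemma sim_sym (A : finType) n (u u' : seq A) : sim n u u' -> sim n u' u.
Proof. by move=> H w Hw; rewrite H. Qed.

Lemma main (A : finType) n : forall m (u u' v v' : seq A) us us' a,
  size us = m -> size us' = m -> size a = m ->
  rich_fact u (zip us a) v -> rich_fact u' (zip us' a) v' ->
  sim n v v' ->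
  (forall i, i < m -> sim n.+1 (nth [::] us i) (nth [::] us' i)) ->
  sim (n + m) u u'.
Proof.
elim => [|m IH] u u' v v' [|x us] [|x' us'] [|b a] //=.
  by move=> _ _ _ [-> _] [-> _] Hv _; rewrite addn0.
move=> [Hs] [Hs'] [Ha] [r [-> [Hr [_ Hf]]]] [r' [-> [Hr' [_ Hf']]]] Hv Hi.
have Hrr := IH r r' v v' us us' a Hs Hs' Ha Hf Hf' Hv (fun i hi => Hi i.+1 hi).
have Hx := Hi 0 (ltn0Sn _).
have Sz : forall (s : seq (seq A)), size s = m -> size (zip s a) = m.
  by move=> s Es; rewrite size_zip Es Ha minnn.
rewrite addnS => w Hw; apply/idP/idP => H.
  apply: (key Hr Hx Hrr _ Hw H) => w' Hw'.
  by apply: (rf_rich Hf'); rewrite Sz.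
apply: (key Hr' (sim_sym Hx) (sim_sym Hrr) _ Hw H) => w' Hw'.
by apply: (rf_rich Hf); rewrite Sz.
Qed.

Theorem lemma5 (A : finType) (n m : nat) (u u' v v' : seq A)
  (us us' : seq (seq A)) (a : seq A) :
  richness u m -> richness u' m ->
  size us = m -> size us' = m -> size a = m ->
  rich_fact u (zip us a) v -> rich_fact u' (zip us' a) v' ->
  sim n v v' ->
  (forall i, i < m -> sim n.+1 (nth [::] us i) (nth [::] us' i)) ->
  sim (n + m) u u'.
Proof. by move=> _ _; apply: main. Qed.
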